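(* Let $H$ be a reduced double-well type potential and $\beta>0$. Then \begin{enumerate} \item $F_\beta^0(\lambda_\beta)F_\beta^1(\lambda_\beta)=1$; \item $\Phi_\beta(01)=F_\beta^1(\lambda_\beta)\Phi_\beta(10)$ and $\Phi_\beta(10)=F_\beta^0(\lambda_\beta)\Phi_\beta(01)$; \item $\nu_\beta[01]=F_\beta^0(\lambda_\beta)\nu_\beta[10]$ and $\nu_\beta[10]=F_\beta^1(\lambda_\beta)\nu_\beta[01]$. \end{enumerate}
   Context: $\Sigma:=\{0,1\}^{\mathbb N}$, $\sigma$ the left shift. A reduced double-well type potential is a continuous nonnegative $H:\Sigma\to\mathbb R$ with summable variation such that $H=0$ on $[00]\cup[11]$, $H=H_n^0>0$ on $[01^n0]$, $H=H_n^1>0$ on $[10^n1]$ ($n\ge1$), and $\sum_{k\ge1}\sup_{n\ge0}|H_k^i-H_{k+n}^i|<\infty$ ($i=0,1$). $\mathcal L_\beta[\Phi](x)=e^{-\beta H(0x)}\Phi(0x)+e^{-\beta H(1x)}\Phi(1x)$; $\Phi_\beta$ the unique positive continuous eigenfunction with $\max\Phi_\beta=1$, $\lambda_\beta$ its eigenvalue, $\nu_\beta$ the unique probability with $\mathcal L_\beta^*\nu_\beta=\lambda_\beta\nu_\beta$. $\Phi_\beta$ is constant on $[01]$ and $[10]$; $\Phi_\beta(01),\Phi_\beta(10)$ denote these values. $F_\beta^i(\lambda):=\sum_{k\ge1}\lambda^{-k}e^{-\beta H_k^i}$ for $i=0,1$. *)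

(* Defs.v *)
From Stdlib Require Import Reals Lra Lia.
Open Scope R_scope.

(* Sigma = {0,1}^N, with 0 = false, 1 = true. *)
Definition Sigma := nat -> bool.

Definition scons (b : bool) (x : Sigma) : Sigma :=
  fun n => match n with O => b | S m => x m end.

Definition agree (n : nat) (x y : Sigma) : Prop :=
  forall i, (i < n)%nat -> x i = y i.

Definition continuous_Sigma (f : Sigma -> R) : Prop :=
  forall x eps, 0 < eps -> exists N, forall y, agree N x y -> Rabs (f y - f x) < eps.

(* summable variation: var_n(H) = sup{|H x - H y| : x,y agree on n coords}
   satisfies sum_n var_n(H) < oo, i.e. var_n is dominated by a summable sequence *)
Definition summable_variation (H : Sigma -> R) : Prop :=
  exists (v : nat -> R) (l : R),
    (forall n, 0 <= v n) /\ infinite_sum v l /\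
    (forall n x y, agree n x y -> Rabs (H x - H y) <= v n).

(* cylinder [0 1^n 0] (b = false) and [1 0^n 1] (b = true) *)
Definition cyl_well (b : bool) (n : nat) (x : Sigma) : Prop :=
  x O = b /\ (forall i, (1 <= i <= n)%nat -> x i = negb b) /\ x (S n) = b.

Definition cyl01 (x : Sigma) : Prop := x O = false /\ x 1%nat = true.
Definition cyl10 (x : Sigma) : Prop := x O = true /\ x 1%nat = false.

Definition ind01 (x : Sigma) : R :=
  if x O then 0 else if x 1%nat then 1 else 0.
Definition ind10 (x : Sigma) : R :=
  if x O then (if x 1%nat then 0 else 1) else 0.

Definition summable_tail_osc (h : nat -> R) : Prop :=
  exists (w : nat -> R) (l : R),
    (forall k, 0 <= w k) /\ infinite_sum w l /\
    (forall k n, Rabs (h (S k) - h (S k + n)%nat) <= w k).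

Definition reduced_double_well (H : Sigma -> R) (h0 h1 : nat -> R) : Prop :=
  continuous_Sigma H /\
  (forall x, 0 <= H x) /\
  summable_variation H /\
  (forall x, x O = x 1%nat -> H x = 0) /\
  (forall n, (1 <= n)%nat -> 0 < h0 n /\ forall x, cyl_well false n x -> H x = h0 n) /\
  (forall n, (1 <= n)%nat -> 0 < h1 n /\ forall x, cyl_well true n x -> H x = h1 n) /\
  summable_tail_osc h0 /\ summable_tail_osc h1.

Definition transfer (H : Sigma -> R) (beta : R) (Phi : Sigma -> R) : Sigma -> R :=
  fun x => exp (- beta * H (scons false x)) * Phi (scons false x)
         + exp (- beta * H (scons true x)) * Phi (scons true x).

Definition is_normalized_eigenfunction (H : Sigma -> R) (beta lam : R)
  (Phi : Sigma -> R) : Prop :=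
  continuous_Sigma Phi /\ (forall x, 0 < Phi x) /\
  (forall x, Phi x <= 1) /\ (exists x, Phi x = 1) /\
  (forall x, transfer H beta Phi x = lam * Phi x).

(* Borel probability measures on the compact metric space Sigma, represented
   (Riesz) as positive normalized linear functionals on C(Sigma). *)
Definition prob_functional (nu : (Sigma -> R) -> R) : Prop :=
  (forall f g a b, continuous_Sigma f -> continuous_Sigma g ->
     nu (fun x => a * f x + b * g x) = a * nu f + b * nu g) /\
  (forall f, continuous_Sigma f -> (forall x, 0 <= f x) -> 0 <= nu f) /\
  nu (fun _ => 1) = 1.

Definition is_eigenmeasure (H : Sigma -> R) (beta lam : R)
  (nu : (Sigma -> R) -> R) : Prop :=
  prob_functional nu /\
  (forall f, continuous_Sigma f -> nu (transfer H beta f) = lam * nu f).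

(* k-th term (k >= 1) of F^i_beta(lam) = sum_{k>=1} lam^{-k} e^{-beta h_k},
   reindexed from 0 for infinite_sum *)
Definition F_term (h : nat -> R) (beta lam : R) (k : nat) : R :=
  / lam ^ (S k) * exp (- beta * h (S k)).

(* Main.v *)
Require Import Defs.
From Stdlib Require Import Reals Lra Lia List Bool FunctionalExtensionality.
Open Scope R_scope.

Fixpoint pref (w : list bool) (x : Sigma) : bool :=
  match w with
  | nil => true
  | c :: w' => Bool.eqb (x O) c && pref w' (fun n => x (S n))
  end.
Definition ind (w : list bool) (x : Sigma) : R := if pref w x then 1 else 0.

Lemma pref_agree w : forall x y, agree (length w) x y -> pref w x = pref w y.
Proof.
  induction w as [|c w IH]; intros x y Hxy; simpl; auto.
  rewrite (Hxy O) by (simpl; lia).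
  rewrite (IH (fun n => x (S n)) (fun n => y (S n))); auto.
  intros i Hi; apply Hxy; simpl; lia.
Qed.

Lemma ind_cont w : continuous_Sigma (ind w).
Proof.
  intros x eps He; exists (length w); intros y Hy.
  unfold ind; rewrite (pref_agree w x y Hy).
  unfold Rminus; rewrite Rplus_opp_r, Rabs_R0; lra.
Qed.

Lemma ind_nonneg w x : 0 <= ind w x.
Proof. unfold ind; destruct (pref w x); lra. Qed.

Lemma ind_split w c x : ind w x = ind (w ++ (c :: nil)) x + ind (w ++ (negb c :: nil)) x.
Proof.
  revert x; induction w as [|d w IH]; intros x; unfold ind; simpl.
  - destruct (x O), c; simpl; lra.
  - destruct (Bool.eqb (x O) d); simpl.
    + specialize (IH (fun n => x (S n))); unfold ind in IH; exact IH.
    + lra.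
Qed.

Lemma transfer_ind H beta c w x :
  transfer H beta (ind (c :: w)) x = exp (- beta * H (scons c x)) * ind w x.
Proof.
  unfold transfer, ind; destruct c; simpl; rewrite ?Rmult_0_r, ?Rplus_0_r, ?Rplus_0_l; reflexivity.
Qed.

Lemma pref_cons c w x : pref (c :: w) x = true -> x O = c.
Proof. simpl; intros Hp; apply andb_prop in Hp; destruct Hp as [Hp _]; now apply Bool.eqb_prop. Qed.

Lemma pref_rep c d k : forall x, pref (repeat c k ++ (d :: nil)) x = true ->
  (forall i, (i < k)%nat -> x i = c) /\ x k = d.
Proof.
  induction k as [|k IH]; intros x Hp.
  - split; [intros; lia|]. simpl in Hp. apply andb_prop in Hp. now apply Bool.eqb_prop.
  - simpl in Hp. apply andb_prop in Hp; destruct Hp as [H1 H2].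
    apply Bool.eqb_prop in H1. destruct (IH _ H2) as [A B]. split; auto.
    intros [|i] Hi; auto. apply A; lia.
Qed.

Lemma repeat_snoc (c : bool) n : repeat c n ++ (c :: nil) = repeat c (S n).
Proof. induction n as [|n IH]; simpl; [reflexivity| rewrite IH; reflexivity]. Qed.

Definition hb (h0 h1 : nat -> R) (b : bool) := if b then h1 else h0.

Lemma transfer_same H beta b w x :
  (forall x, x O = x 1%nat -> H x = 0) ->
  transfer H beta (ind (b :: b :: w)) x = ind (b :: w) x.
Proof.
  intros Hz. rewrite transfer_ind.
  destruct (pref (b :: w) x) eqn:E.
  - rewrite (Hz (scons b x)). rewrite Rmult_0_r, exp_0, Rmult_1_l; reflexivity.
    simpl. symmetry; exact (pref_cons _ _ _ E).
  - unfold ind at 1 2. rewrite E. ring.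
Qed.

Lemma transfer_well H h0 h1 beta b k x :
  (forall b n, (1 <= n)%nat -> 0 < hb h0 h1 b n /\ (forall x, cyl_well b n x -> H x = hb h0 h1 b n)) ->
  (1 <= k)%nat ->
  transfer H beta (ind (b :: (repeat (negb b) k ++ (b :: nil)))) x
  = exp (- beta * hb h0 h1 b k) * ind (repeat (negb b) k ++ (b :: nil)) x.
Proof.
  intros Hw Hk. rewrite transfer_ind.
  destruct (pref (repeat (negb b) k ++ (b :: nil)) x) eqn:E.
  - destruct (pref_rep _ _ _ _ E) as [A B].
    rewrite (proj2 (Hw b k Hk)); auto.
    split; [reflexivity|split].
    + intros [|i] Hi; [lia|]. simpl. apply A; lia.
    + simpl. exact B.
  - unfold ind; rewrite E; ring.
Qed.

Fixpoint psum (g : nat -> R) (n : nat) : R :=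
  match n with O => 0 | S n => psum g n + g n end.

Lemma psum_ext g g' n : (forall k, g k = g' k) -> psum g n = psum g' n.
Proof. intros E; induction n; simpl; [reflexivity| rewrite IHn, E; reflexivity]. Qed.

Lemma psum_scal g c n : psum (fun k => g k * c) n = psum g n * c.
Proof. induction n; simpl; [ring| rewrite IHn; ring]. Qed.

Lemma psum_sum g n : psum g (S n) = sum_f_R0 g n.
Proof. induction n; simpl in *; [ring| rewrite <- IHn; reflexivity]. Qed.

Lemma inf_psum g F : infinite_sum g F -> Un_cv (psum g) F.
Proof.
  intros Hs eps He. destruct (Hs eps He) as [N HN]. exists (S N).
  intros [|n] Hn; [lia|]. rewrite psum_sum. apply HN; lia.
Qed.

Lemma psum_growing g : (forall k, 0 <= g k) -> Un_growing (psum g).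
Proof. intros Hg n; simpl; specialize (Hg n); lra. Qed.

Lemma cv_scal u l c : Un_cv u l -> Un_cv (fun n => u n * c) (l * c).
Proof.
  intros Hu. apply CV_mult; auto. intros eps He; exists O; intros; unfold R_dist.
  unfold Rminus; rewrite Rplus_opp_r, Rabs_R0; lra.
Qed.

Lemma lim_le u l a : (forall n, u n <= a) -> Un_cv u l -> l <= a.
Proof.
  intros Hu Hc. destruct (Rle_dec l a) as [|Hn]; auto. exfalso.
  destruct (Hc (l - a)) as [N HN]; [lra|]. specialize (HN N (le_n _)). specialize (Hu N).
  unfold R_dist in HN. apply Rabs_def2 in HN. lra.
Qed.

Lemma Un_cv_ext u v l : (forall n, u n = v n) -> Un_cv u l -> Un_cv v l.
Proof. intros E Hc eps He; destruct (Hc eps He) as [N HN]; exists N; intros n Hn; rewrite <- E; auto. Qed.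

Definition F_val_spec (h : nat -> R) beta lam F := infinite_sum (F_term h beta lam) F.

Lemma F_term_pos h beta lam k : 0 < lam -> 0 < F_term h beta lam k.
Proof.
  intros Hl; unfold F_term. apply Rmult_lt_0_compat; [apply Rinv_0_lt_compat, pow_lt; auto| apply exp_pos].
Qed.

Lemma F_term_le h beta lam k : 1 < lam -> 0 <= beta -> 0 <= h (S k) ->
  F_term h beta lam k <= (/ lam) ^ k.
Proof.
  intros Hl Hb Hh; unfold F_term. rewrite pow_inv.
  assert (Hp : 0 < lam ^ k) by (apply pow_lt; lra).
  assert (He : exp (- beta * h (S k)) <= 1).
  { rewrite <- exp_0. destruct (Req_dec (- beta * h (S k)) 0) as [E|E]; [rewrite E; lra|].
    left; apply exp_increasing. nra. }
  simpl. rewrite Rinv_mult.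
  assert (0 < / lam < 1).
  { split; [apply Rinv_0_lt_compat; lra|]. rewrite <- Rinv_1. apply Rinv_lt_contravar; lra. }
  assert (0 < / lam ^ k) by (apply Rinv_0_lt_compat; auto).
  assert (0 < exp (- beta * h (S k))) by apply exp_pos.
  apply Rle_trans with (/ lam * / lam ^ k * 1).
  - apply Rmult_le_compat_l; [nra|lra].
  - nra.
Qed.

Lemma F_exists h beta lam : 1 < lam -> 0 <= beta -> (forall k, 0 <= h (S k)) ->
  exists F, infinite_sum (F_term h beta lam) F.
Proof.
  intros Hl Hb Hh.
  assert (Hr : 0 < / lam < 1).
  { split; [apply Rinv_0_lt_compat; lra|]. rewrite <- Rinv_1. apply Rinv_lt_contravar; lra. }
  destruct (growing_cv (sum_f_R0 (F_term h beta lam))) as [F HF].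
  - intros n; simpl. pose proof (F_term_pos h beta lam (S n)). lra.
  - exists (/ (1 - / lam)). intros x [n ->].
    apply Rle_trans with (sum_f_R0 (fun i => (/ lam) ^ i) n).
    + apply sum_Rle; intros; apply F_term_le; auto; lra.
    + rewrite tech3 by lra. unfold Rdiv.
      assert (0 < / (1 - / lam)) by (apply Rinv_0_lt_compat; lra).
      pose proof (pow_lt (/ lam) (S n) (proj1 Hr)); nra.
  - exists F; exact HF.
Qed.

Lemma nu_add nu f g : prob_functional nu -> continuous_Sigma f -> continuous_Sigma g ->
  nu (fun x => f x + g x) = nu f + nu g.
Proof.
  intros [Hlin _] Hf Hg. specialize (Hlin f g 1 1 Hf Hg).
  replace (fun x => f x + g x) with (fun x => 1 * f x + 1 * g x)
    by (apply functional_extensionality; intros; ring).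
  rewrite Hlin; ring.
Qed.

Lemma nu_scal nu f a : prob_functional nu -> continuous_Sigma f ->
  nu (fun x => a * f x) = a * nu f.
Proof.
  intros [Hlin _] Hf. specialize (Hlin f f a 0 Hf Hf).
  replace (fun x => a * f x) with (fun x => a * f x + 0 * f x)
    by (apply functional_extensionality; intros; ring).
  rewrite Hlin; ring.
Qed.

Lemma nu_split nu w c : prob_functional nu ->
  nu (ind w) = nu (ind (w ++ (c :: nil))) + nu (ind (w ++ (negb c :: nil))).
Proof.
  intros Hp. rewrite <- nu_add; auto using ind_cont.
  f_equal; apply functional_extensionality; intros; apply ind_split.
Qed.

Lemma nu_nonneg nu w : prob_functional nu -> 0 <= nu (ind w).
Proof. intros [_ [Hpos _]]. apply Hpos; [apply ind_cont| apply ind_nonneg]. Qed.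

Lemma N_same H beta lam nu b w :
  (forall x, x O = x 1%nat -> H x = 0) -> is_eigenmeasure H beta lam nu ->
  lam * nu (ind (b :: b :: w)) = nu (ind (b :: w)).
Proof.
  intros Hz [Hp HL]. rewrite <- HL by apply ind_cont. f_equal.
  apply functional_extensionality; intros; apply transfer_same; auto.
Qed.

Lemma N_well H h0 h1 beta lam nu b k :
  (forall b n, (1 <= n)%nat -> 0 < hb h0 h1 b n /\ (forall x, cyl_well b n x -> H x = hb h0 h1 b n)) ->
  is_eigenmeasure H beta lam nu -> (1 <= k)%nat ->
  lam * nu (ind (b :: (repeat (negb b) k ++ (b :: nil))))
  = exp (- beta * hb h0 h1 b k) * nu (ind (repeat (negb b) k ++ (b :: nil))).
Proof.
  intros Hw [Hp HL] Hk. rewrite <- HL by apply ind_cont.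
  rewrite <- nu_scal by (auto; apply ind_cont). f_equal.
  apply functional_extensionality; intros; apply transfer_well; auto.
Qed.

Lemma N_chain H beta lam nu b j :
  (forall x, x O = x 1%nat -> H x = 0) -> is_eigenmeasure H beta lam nu -> 0 < lam ->
  nu (ind (repeat (negb b) (S j) ++ (b :: nil))) = (/ lam) ^ j * nu (ind (negb b :: b :: nil)).
Proof.
  intros Hz He Hl. induction j as [|j IH].
  - simpl; ring.
  - assert (E : lam * nu (ind (repeat (negb b) (S (S j)) ++ (b :: nil)))
                = nu (ind (repeat (negb b) (S j) ++ (b :: nil)))).
    { exact (N_same H beta lam nu (negb b) (repeat (negb b) j ++ (b :: nil)) Hz He). }
    rewrite IH in E. change ((/ lam) ^ (S j)) with (/ lam * (/ lam) ^ j).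
    apply Rmult_eq_reg_l with lam; [|lra]. rewrite E. field. lra.
Qed.

Lemma N_term H h0 h1 beta lam nu b k :
  (forall x, x O = x 1%nat -> H x = 0) ->
  (forall b n, (1 <= n)%nat -> 0 < hb h0 h1 b n /\ (forall x, cyl_well b n x -> H x = hb h0 h1 b n)) ->
  is_eigenmeasure H beta lam nu -> 0 < lam ->
  nu (ind (b :: (repeat (negb b) (S k) ++ (b :: nil))))
  = F_term (hb h0 h1 b) beta lam k * nu (ind (negb b :: b :: nil)).
Proof.
  intros Hz Hw He Hl.
  pose proof (N_well H h0 h1 beta lam nu b (S k) Hw He ltac:(lia)) as E.
  rewrite (N_chain H beta lam nu b k Hz He Hl) in E.
  unfold F_term. rewrite pow_inv in E.
  apply Rmult_eq_reg_l with lam; [|lra]. rewrite E. simpl.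
  assert (0 < lam ^ k) by (apply pow_lt; auto).
  field. split; lra.
Qed.

Lemma N_decomp nu b N : prob_functional nu ->
  nu (ind (b :: negb b :: nil)) =
  psum (fun k => nu (ind (b :: (repeat (negb b) (S k) ++ (b :: nil))))) N
  + nu (ind (b :: repeat (negb b) (S N))).
Proof.
  intros Hp. induction N as [|N IH].
  - simpl; ring.
  - rewrite IH. rewrite (nu_split nu (b :: repeat (negb b) (S N)) b Hp).
    simpl psum.
    replace ((b :: repeat (negb b) (S N)) ++ (negb b :: nil)) with (b :: repeat (negb b) (S (S N))).
    + simpl. ring.
    + simpl. f_equal. f_equal. symmetry. apply (repeat_snoc (negb b) N).
Qed.

Lemma nu_ge H h0 h1 beta lam nu b F :
  (forall x, x O = x 1%nat -> H x = 0) ->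
  (forall b n, (1 <= n)%nat -> 0 < hb h0 h1 b n /\ (forall x, cyl_well b n x -> H x = hb h0 h1 b n)) ->
  is_eigenmeasure H beta lam nu -> 0 < lam ->
  infinite_sum (F_term (hb h0 h1 b) beta lam) F ->
  F * nu (ind (negb b :: b :: nil)) <= nu (ind (b :: negb b :: nil)).
Proof.
  intros Hz Hw He Hl HF.
  apply lim_le with (u := fun N => psum (F_term (hb h0 h1 b) beta lam) N * nu (ind (negb b :: b :: nil))).
  - intros N. rewrite (N_decomp nu b N (proj1 He)).
    rewrite (psum_ext (fun k => nu (ind (b :: (repeat (negb b) (S k) ++ (b :: nil))))) (fun k => F_term (hb h0 h1 b) beta lam k * nu (ind (negb b :: b :: nil))))
      by (intros; apply (N_term H h0 h1 beta lam nu b k Hz Hw He Hl)).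
    rewrite psum_scal. pose proof (nu_nonneg nu (b :: repeat (negb b) (S N)) (proj1 He)). lra.
  - apply cv_scal, inf_psum; auto.
Qed.

Fixpoint pre (m : nat) (b : bool) (x : Sigma) : Sigma :=
  match m with O => x | S m => scons b (pre m b x) end.

Lemma pre_lt m b x : forall i, (i < m)%nat -> pre m b x i = b.
Proof.
  induction m as [|m IH]; intros i Hi; [lia|]. destruct i as [|i]; simpl; [reflexivity|].
  apply IH; lia.
Qed.

Lemma pre_ge m b x j : pre m b x (m + j)%nat = x j.
Proof. induction m as [|m IH]; simpl; auto. Qed.

Definition cyl (b : bool) (x : Sigma) : Prop := x O = b /\ x 1%nat = negb b.

Lemma pre_0 m b x : cyl b x -> pre m b x O = b.
Proof. intros [H0 _]. destruct m; [exact H0| reflexivity]. Qed.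

Lemma transfer_b H beta Phi b x :
  transfer H beta Phi x = exp (- beta * H (scons b x)) * Phi (scons b x)
    + exp (- beta * H (scons (negb b) x)) * Phi (scons (negb b) x).
Proof. destruct b; unfold transfer; simpl; ring. Qed.

Lemma Phi_iter H h0 h1 beta lam Phi b x :
  (forall x, x O = x 1%nat -> H x = 0) ->
  (forall b n, (1 <= n)%nat -> 0 < hb h0 h1 b n /\ (forall x, cyl_well b n x -> H x = hb h0 h1 b n)) ->
  is_normalized_eigenfunction H beta lam Phi -> 0 < lam -> cyl b x ->
  forall m, Phi x = (/ lam) ^ m * Phi (pre m b x)
    + psum (fun k => F_term (hb h0 h1 (negb b)) beta lam k * Phi (scons (negb b) (pre k b x))) m.
Proof.
  intros Hz Hw [_ [_ [_ [_ Heig]]]] Hl Hx m. induction m as [|m IH].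
  - simpl; ring.
  - rewrite IH. simpl psum.
    pose proof (Heig (pre m b x)) as E. rewrite (transfer_b H beta Phi b) in E.
    rewrite (Hz (scons b (pre m b x))) in E.
    2:{ simpl. symmetry. apply pre_0; auto. }
    rewrite (proj2 (Hw (negb b) (S m) ltac:(lia))) in E.
    2:{ split; [reflexivity| split].
        - intros [|i] Hi; [lia|]. simpl. rewrite negb_involutive.
          destruct (Nat.eq_dec i m) as [->|Hne].
          + pose proof (pre_ge m b x O) as G. rewrite Nat.add_0_r in G. rewrite G. apply Hx.
          + apply pre_lt; lia.
        - simpl. pose proof (pre_ge m b x 1) as G. rewrite Nat.add_1_r in G. rewrite G.
          apply Hx. }
    rewrite Rmult_0_r, exp_0, Rmult_1_l in E.
    change (pre (S m) b x) with (scons b (pre m b x)).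
    unfold F_term. rewrite <- pow_inv. simpl.
    apply Rmult_eq_reg_l with lam; [|lra].
    set (S0 := psum _ m).
    transitivity (lam * S0 + (/ lam) ^ m * (lam * Phi (pre m b x))); [ring|].
    rewrite <- E. field. lra.
Qed.

Lemma Phi_bounds H beta lam Phi : is_normalized_eigenfunction H beta lam Phi ->
  forall x, 0 < Phi x <= 1.
Proof. intros [_ [Hp [Hb _]]] x; auto. Qed.

Lemma Phi_cv H h0 h1 beta lam Phi b x :
  (forall x, x O = x 1%nat -> H x = 0) ->
  (forall b n, (1 <= n)%nat -> 0 < hb h0 h1 b n /\ (forall x, cyl_well b n x -> H x = hb h0 h1 b n)) ->
  is_normalized_eigenfunction H beta lam Phi -> 1 < lam -> cyl b x ->
  Un_cv (psum (fun k => F_term (hb h0 h1 (negb b)) beta lam k * Phi (scons (negb b) (pre k b x)))) (Phi x).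
Proof.
  intros Hz Hw HP Hl Hx eps He.
  assert (Hr : Rabs (/ lam) < 1).
  { rewrite Rabs_right by (left; apply Rinv_0_lt_compat; lra).
    rewrite <- Rinv_1. apply Rinv_lt_contravar; lra. }
  destruct (pow_lt_1_zero _ Hr eps He) as [N HN]. exists N. intros n Hn.
  pose proof (Phi_iter H h0 h1 beta lam Phi b x Hz Hw HP ltac:(lra) Hx n) as E.
  unfold R_dist. set (S0 := psum _ n) in *.
  replace (S0 - Phi x) with (- ((/ lam) ^ n * Phi (pre n b x))) by lra.
  rewrite Rabs_Ropp, Rabs_mult. pose proof (Phi_bounds _ _ _ _ HP (pre n b x)).
  rewrite (Rabs_right (Phi _)) by lra. specialize (HN n Hn).
  pose proof (Rabs_pos ((/ lam) ^ n)). nra.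
Qed.

Lemma psum_minus g g' n : psum g n - psum g' n = psum (fun k => g k - g' k) n.
Proof. induction n; simpl; [ring| rewrite <- IHn; ring]. Qed.

Lemma psum_abs g n : Rabs (psum g n) <= psum (fun k => Rabs (g k)) n.
Proof.
  induction n; simpl; [rewrite Rabs_R0; lra|].
  eapply Rle_trans; [apply Rabs_triang| lra].
Qed.

Lemma psum_le g g' n : (forall k, g k <= g' k) -> psum g n <= psum g' n.
Proof. intros E; induction n; simpl; [lra| specialize (E n); lra]. Qed.

Lemma psum_split2 g A B N d :
  psum (fun k => g k * (if (k <? N)%nat then A else B)) (N + d)
  = psum g N * A + (psum g (N + d) - psum g N) * B.
Proof.
  assert (H0 : forall n, (n <= N)%nat -> psum (fun k => g k * (if (k <? N)%nat then A else B)) n = psum g n * A).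
  { induction n as [|n IH]; intros Hn; simpl; [ring|].
    rewrite IH by lia. replace (n <? N)%nat with true by (symmetry; apply Nat.ltb_lt; lia). ring. }
  induction d as [|d IH].
  - rewrite Nat.add_0_r, H0 by lia. ring.
  - rewrite Nat.add_succ_r. simpl. rewrite IH.
    replace (N + d <? N)%nat with false by (symmetry; apply Nat.ltb_ge; lia). ring.
Qed.

Lemma geo_limit r a c N : 0 <= r < 1 -> (forall m, (m >= N)%nat -> a <= r ^ m + c) -> a <= c.
Proof.
  intros Hr Ha. destruct (Rle_dec a c) as [|Hn]; auto. exfalso.
  assert (Hr' : Rabs r < 1) by (rewrite Rabs_right; lra).
  destruct (pow_lt_1_zero r Hr' (a - c)) as [N' HN']; [lra|].
  specialize (HN' (max N N') ltac:(lia)). specialize (Ha (max N N') ltac:(lia)).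
  pose proof (Rle_abs (r ^ max N N')). lra.
Qed.

Definition Dset (Phi : Sigma -> R) (b : bool) (d : R) : Prop :=
  exists x x', cyl b x /\ cyl b x' /\ d = Rabs (Phi x - Phi x').

Lemma Dlub H beta lam Phi b : is_normalized_eigenfunction H beta lam Phi ->
  exists M, is_lub (Dset Phi b) M /\ 0 <= M.
Proof.
  intros HP.
  set (p := scons b (scons (negb b) (fun _ => b))).
  assert (Hp : cyl b p) by (split; reflexivity).
  destruct (completeness (Dset Phi b)) as [M HM].
  - exists 1. intros d [x [x' [_ [_ ->]]]].
    pose proof (Phi_bounds _ _ _ _ HP x). pose proof (Phi_bounds _ _ _ _ HP x').
    apply Rabs_le; lra.
  - exists 0. exists p, p. split; auto. split; auto. unfold Rminus; rewrite Rplus_opp_r, Rabs_R0; auto.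
  - exists M; split; auto. apply (proj1 HM). exists p, p. split; auto. split; auto.
    unfold Rminus; rewrite Rplus_opp_r, Rabs_R0; auto.
Qed.

Lemma psum_nonneg g n : (forall k, 0 <= g k) -> 0 <= psum g n.
Proof. intros E; induction n; simpl; [lra| specialize (E n); lra]. Qed.

Lemma key H h0 h1 beta lam Phi b F M M' eps :
  (forall x, x O = x 1%nat -> H x = 0) ->
  (forall b n, (1 <= n)%nat -> 0 < hb h0 h1 b n /\ (forall x, cyl_well b n x -> H x = hb h0 h1 b n)) ->
  is_normalized_eigenfunction H beta lam Phi -> 1 < lam ->
  infinite_sum (F_term (hb h0 h1 (negb b)) beta lam) F ->
  is_lub (Dset Phi b) M -> is_lub (Dset Phi (negb b)) M' -> 0 < eps ->
  exists a, 0 <= a < F /\ M <= a * M' + (F - a) * eps.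
Proof.
  intros Hz Hw HP Hl HF HM HM' He.
  set (T := F_term (hb h0 h1 (negb b)) beta lam).
  assert (HT : forall k, 0 < T k) by (intros; apply F_term_pos; lra).
  assert (HTn : forall k, 0 <= T k) by (intros k; specialize (HT k); lra).
  assert (Hcv := inf_psum T F HF).
  assert (Hle := growing_ineq _ _ (psum_growing T HTn) Hcv).
  set (cstar := scons (negb b) (fun _ => b)).
  pose proof HP as [Hc _].
  destruct (Hc cstar (eps / 2)) as [N HN]; [lra|].
  exists (psum T N). split.
  { split; [apply psum_nonneg; auto|]. specialize (Hle (S N)). simpl in Hle. specialize (HT N). lra. }
  apply (proj2 HM). intros d [x [x' [Hx [Hx' ->]]]].
  assert (Hr : 0 <= / lam < 1).
  { split; [left; apply Rinv_0_lt_compat; lra|]. rewrite <- Rinv_1. apply Rinv_lt_contravar; lra. }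
  apply (geo_limit (/ lam) _ _ N Hr). intros m Hm.
  pose proof (Phi_iter H h0 h1 beta lam Phi b x Hz Hw HP ltac:(lra) Hx m) as Ex.
  pose proof (Phi_iter H h0 h1 beta lam Phi b x' Hz Hw HP ltac:(lra) Hx' m) as Ex'.
  set (d := fun k => Phi (scons (negb b) (pre k b x)) - Phi (scons (negb b) (pre k b x'))).
  assert (Eq : Phi x - Phi x' = (/ lam) ^ m * (Phi (pre m b x) - Phi (pre m b x'))
                 + psum (fun k => T k * d k) m).
  { rewrite Ex, Ex' at 1. 
    transitivity ((/ lam) ^ m * (Phi (pre m b x) - Phi (pre m b x')) +
       (psum (fun k => T k * Phi (scons (negb b) (pre k b x))) m -
        psum (fun k => T k * Phi (scons (negb b) (pre k b x'))) m)); [unfold T; ring|].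
    rewrite psum_minus. f_equal. apply psum_ext; intros; unfold d; ring. }
  set (c := fun k => if (k <? N)%nat then M' else eps).
  assert (Hd : forall k, Rabs (d k) <= c k).
  { intros k. unfold c. destruct (k <? N)%nat eqn:Ek.
    - apply (proj1 HM'). exists (scons (negb b) (pre k b x)), (scons (negb b) (pre k b x')).
      split; [split; [reflexivity| simpl; rewrite negb_involutive; apply pre_0; auto]|].
      split; [split; [reflexivity| simpl; rewrite negb_involutive; apply pre_0; auto]|].
      reflexivity.
    - apply Nat.ltb_ge in Ek.
      assert (Ag : forall y, cyl b y -> agree N cstar (scons (negb b) (pre k b y))).
      { intros y Hy i Hi. destruct i as [|i]; [reflexivity|]. simpl. symmetry. apply pre_lt. lia. }
      pose proof (HN _ (Ag x Hx)). pose proof (HN _ (Ag x' Hx')).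
      unfold d. apply Rabs_def2 in H0. apply Rabs_def2 in H1. apply Rabs_le. lra. }
  assert (Hsum : Rabs (psum (fun k => T k * d k) m) <= psum T N * M' + (F - psum T N) * eps).
  { eapply Rle_trans; [apply psum_abs|].
    apply Rle_trans with (psum (fun k => T k * c k) m).
    - apply psum_le; intros k. rewrite Rabs_mult, Rabs_right by (apply Rle_ge; auto).
      apply Rmult_le_compat_l; auto.
    - replace m with (N + (m - N))%nat by lia. unfold c. rewrite psum_split2.
      specialize (Hle (N + (m - N))%nat). apply Rplus_le_compat_l. apply Rmult_le_compat_r; lra. }
  assert (Hq : Rabs ((/ lam) ^ m * (Phi (pre m b x) - Phi (pre m b x'))) <= (/ lam) ^ m).
  { rewrite Rabs_mult. rewrite (Rabs_right ((/ lam) ^ m)) by (apply Rle_ge, pow_le; lra).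
    pose proof (Phi_bounds _ _ _ _ HP (pre m b x)). pose proof (Phi_bounds _ _ _ _ HP (pre m b x')).
    assert (Rabs (Phi (pre m b x) - Phi (pre m b x')) <= 1) by (apply Rabs_le; lra).
    pose proof (pow_le (/ lam) m (proj1 Hr)). nra. }
  rewrite Eq. eapply Rle_trans; [apply Rabs_triang|]. lra.
Qed.

Lemma eps_zero M C : 0 <= M -> 0 < C -> (forall eps, 0 < eps -> M <= C * eps) -> M = 0.
Proof.
  intros H0 HC Hall. destruct (Rle_dec M 0) as [|Hn]; [lra|]. exfalso.
  specialize (Hall (M / (2 * C))). assert (0 < M / (2 * C)) by (apply Rdiv_lt_0_compat; lra).
  specialize (Hall H). replace (C * (M / (2 * C))) with (M / 2) in Hall by (field; lra). lra.
Qed.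

Lemma combine M0 M1 F0 F1 : 0 < F0 -> 0 < F1 -> F0 * F1 <= 1 -> 0 <= M0 -> 0 <= M1 ->
  (forall eps, 0 < eps ->
    (exists a, 0 <= a < F1 /\ M0 <= a * M1 + (F1 - a) * eps) /\
    (exists c, 0 <= c < F0 /\ M1 <= c * M0 + (F0 - c) * eps)) ->
  M0 = 0 /\ M1 = 0.
Proof.
  intros HF0 HF1 HF HM0 HM1 Hall.
  assert (E0 : M0 = 0).
  { apply (eps_zero M0 ((F0 + 1) / F0)); auto.
    { apply Rdiv_lt_0_compat; lra. }
    intros eps He. destruct (Hall eps He) as [[a [Ha H1]] [c [Hc H2]]].
    set (u := F1 - a). set (v := F0 - c).
    assert (Hu : 0 < u) by (unfold u; lra). assert (Hv : 0 < v) by (unfold v; lra).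
    assert (S1 : M0 <= a * c * M0 + a * v * eps + u * eps).
    { apply Rle_trans with (a * M1 + u * eps); [unfold u; lra|].
      assert (HH : a * M1 <= a * (c * M0 + v * eps)) by (apply Rmult_le_compat_l; unfold v; lra).
      replace (a * (c * M0 + v * eps)) with (a * c * M0 + a * v * eps) in HH by ring. lra. }
    assert (S2 : F0 * u + a * v <= 1 - a * c).
    { replace (F0 * u + a * v) with (F0 * F1 - a * c) by (unfold u, v; ring). lra. }
    assert (S3 : (F0 * u + a * v) * M0 <= (a * v + u) * eps) by nra.
    assert (S4 : F0 * (a * v + u) <= (F0 + 1) * (F0 * u + a * v)) by nra.
    assert (Hp : 0 < F0 * u + a * v) by nra.
    apply Rmult_le_reg_l with (F0 * (F0 * u + a * v)); [nra|].
    replace (F0 * (F0 * u + a * v) * ((F0 + 1) / F0 * eps)) with ((F0 + 1) * (F0 * u + a * v) * eps)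
      by (field; lra).
    nra. }
  split; auto. apply (eps_zero M1 F0); auto.
  intros eps He. destruct (Hall eps He) as [_ [c [Hc H2]]]. rewrite E0 in H2. nra.
Qed.

Lemma Phi_rel H h0 h1 beta lam Phi b x y F :
  (forall x, x O = x 1%nat -> H x = 0) ->
  (forall b n, (1 <= n)%nat -> 0 < hb h0 h1 b n /\ (forall x, cyl_well b n x -> H x = hb h0 h1 b n)) ->
  is_normalized_eigenfunction H beta lam Phi -> 1 < lam ->
  (forall y y', cyl (negb b) y -> cyl (negb b) y' -> Phi y = Phi y') ->
  infinite_sum (F_term (hb h0 h1 (negb b)) beta lam) F ->
  cyl b x -> cyl (negb b) y -> Phi x = F * Phi y.
Proof.
  intros Hz Hw HP Hl Hcst HF Hx Hy.
  pose proof (Phi_cv H h0 h1 beta lam Phi b x Hz Hw HP Hl Hx) as C1.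
  assert (C2 : Un_cv (psum (fun k => F_term (hb h0 h1 (negb b)) beta lam k * Phi (scons (negb b) (pre k b x)))) (F * Phi y)).
  { apply Un_cv_ext with (fun n => psum (F_term (hb h0 h1 (negb b)) beta lam) n * Phi y).
    - intros n. rewrite <- psum_scal. apply psum_ext. intros k. f_equal. apply Hcst; auto.
      split; [reflexivity| simpl; rewrite negb_involutive; apply pre_0; auto].
    - apply cv_scal, inf_psum; auto. }
  exact (UL_sequence _ _ _ C1 C2).
Qed.

Lemma F_pos h beta lam F : 1 < lam -> infinite_sum (F_term h beta lam) F -> 0 < F.
Proof.
  intros Hl HF.
  assert (HT : forall k, 0 <= F_term h beta lam k) by (intros; left; apply F_term_pos; lra).
  pose proof (growing_ineq _ _ (psum_growing _ HT) (inf_psum _ _ HF) 1%nat). simpl in H.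
  pose proof (F_term_pos h beta lam O ltac:(lra)). lra.
Qed.

Lemma const_of H beta lam Phi b M : is_normalized_eigenfunction H beta lam Phi ->
  is_lub (Dset Phi b) M -> M = 0 -> forall y y', cyl b y -> cyl b y' -> Phi y = Phi y'.
Proof.
  intros HP HM E y y' Hy Hy'.
  assert (Rabs (Phi y - Phi y') <= M) by (apply (proj1 HM); exists y, y'; auto).
  rewrite E in H0. pose proof (Rle_abs (Phi y - Phi y')).
  pose proof (Rle_abs (- (Phi y - Phi y'))). rewrite Rabs_Ropp in H2. lra.
Qed.

Theorem corollary3p5 (H : Sigma -> R) (h0 h1 : nat -> R) (beta lam : R)
  (Phi : Sigma -> R) (nu : (Sigma -> R) -> R) :
  reduced_double_well H h0 h1 -> 0 < beta ->
  is_normalized_eigenfunction H beta lam Phi ->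
  is_eigenmeasure H beta lam nu ->
  exists F0 F1 : R,
    infinite_sum (F_term h0 beta lam) F0 /\
    infinite_sum (F_term h1 beta lam) F1 /\
    F0 * F1 = 1 /\
    (forall x y, cyl01 x -> cyl10 y ->
       Phi x = F1 * Phi y /\ Phi y = F0 * Phi x) /\
    nu ind01 = F0 * nu ind10 /\
    nu ind10 = F1 * nu ind01.
Proof.
  intros Hrdw Hbeta HP Hnu.
  destruct Hrdw as [_ [_ [_ [Hz [Hw0 [Hw1 _]]]]]].
  assert (Hw : forall b n, (1 <= n)%nat -> 0 < hb h0 h1 b n /\
                 (forall x, cyl_well b n x -> H x = hb h0 h1 b n)).
  { intros [|] n Hn; simpl; auto. }
  assert (Hl : 1 < lam).
  { set (z := fun _ : nat => false).
    pose proof HP as [_ [Hpos [_ [_ Heig]]]].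
    specialize (Heig z). unfold transfer in Heig.
    assert (Ez : scons false z = z) by (apply functional_extensionality; intros [|n]; reflexivity).
    rewrite Ez, (Hz z eq_refl), Rmult_0_r, exp_0, Rmult_1_l in Heig.
    pose proof (Hpos z).
    assert (0 < exp (- beta * H (scons true z)) * Phi (scons true z))
      by (apply Rmult_lt_0_compat; [apply exp_pos| apply Hpos]).
    nra. }
  assert (Hh : forall b k, 0 <= hb h0 h1 b (S k)) by (intros b k; destruct (Hw b (S k) ltac:(lia)); lra).
  destruct (F_exists h0 beta lam Hl (Rlt_le _ _ Hbeta) (Hh false)) as [F0 HF0].
  destruct (F_exists h1 beta lam Hl (Rlt_le _ _ Hbeta) (Hh true)) as [F1 HF1].
  pose proof (F_pos _ _ _ _ Hl HF0) as HF0p. pose proof (F_pos _ _ _ _ Hl HF1) as HF1p.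
  exists F0, F1.
  pose proof (nu_ge H h0 h1 beta lam nu false F0 Hz Hw Hnu ltac:(lra) HF0) as G0. simpl negb in G0.
  pose proof (nu_ge H h0 h1 beta lam nu true F1 Hz Hw Hnu ltac:(lra) HF1) as G1. simpl negb in G1.
  set (n01 := nu (ind (false :: true :: nil))) in *.
  set (n10 := nu (ind (true :: false :: nil))) in *.
  assert (Hp := proj1 Hnu).
  assert (Hsum : n01 + n10 = 1 - / lam).
  { pose proof (nu_split nu nil false Hp) as E1. simpl in E1.
    change (ind nil) with (fun _ : Sigma => 1) in E1. rewrite (proj2 (proj2 Hp)) in E1.
    pose proof (nu_split nu (false :: nil) false Hp) as E2. simpl in E2.
    pose proof (nu_split nu (true :: nil) true Hp) as E3. simpl in E3.
    pose proof (N_same H beta lam nu false nil Hz Hnu) as E4.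
    pose proof (N_same H beta lam nu true nil Hz Hnu) as E5.
    unfold n01, n10.
    apply Rmult_eq_reg_l with lam; [|lra].
    rewrite Rmult_plus_distr_l. field_simplify; [|lra].
    nra. }
  assert (Hn01 : 0 <= n01) by apply nu_nonneg, Hp.
  assert (Hn10 : 0 <= n10) by apply nu_nonneg, Hp.
  assert (Hinv : / lam < 1) by (rewrite <- Rinv_1; apply Rinv_lt_contravar; lra).
  assert (Hpos01 : 0 < n01).
  { destruct (Rle_dec n01 0) as [Hle|]; [|lra]. exfalso.
    assert (n10 <= 0) by nra. lra. }
  assert (HFF : F0 * F1 <= 1).
  { assert (F0 * F1 * n01 <= n01) by nra. nra. }
  destruct (Dlub H beta lam Phi false HP) as [M0 [HM0 HM0p]].
  destruct (Dlub H beta lam Phi true HP) as [M1 [HM1 HM1p]].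
  destruct (combine M0 M1 F0 F1 HF0p HF1p HFF HM0p HM1p) as [E0 E1].
  { intros eps He. split.
    - exact (key H h0 h1 beta lam Phi false F1 M0 M1 eps Hz Hw HP Hl HF1 HM0 HM1 He).
    - exact (key H h0 h1 beta lam Phi true F0 M1 M0 eps Hz Hw HP Hl HF0 HM1 HM0 He). }
  pose proof (const_of H beta lam Phi false M0 HP HM0 E0) as C0.
  pose proof (const_of H beta lam Phi true M1 HP HM1 E1) as C1.
  assert (Hrel : forall x y, cyl01 x -> cyl10 y -> Phi x = F1 * Phi y /\ Phi y = F0 * Phi x).
  { intros x y Hx Hy. split.
    - exact (Phi_rel H h0 h1 beta lam Phi false x y F1 Hz Hw HP Hl C1 HF1 Hx Hy).
    - exact (Phi_rel H h0 h1 beta lam Phi true y x F0 Hz Hw HP Hl C0 HF0 Hy Hx). }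
  assert (HF : F0 * F1 = 1).
  { set (x := scons false (scons true (fun _ => true))).
    set (y := scons true (scons false (fun _ => false))).
    destruct (Hrel x y) as [R1 R2]; [split; reflexivity| split; reflexivity|].
    pose proof (Phi_bounds _ _ _ _ HP x).
    rewrite R2 in R1. apply Rmult_eq_reg_r with (Phi x); [|lra]. lra. }
  assert (I01 : ind01 = ind (false :: true :: nil)).
  { apply functional_extensionality; intros x; unfold ind01, ind; simpl.
    destruct (x O), (x 1%nat); reflexivity. }
  assert (I10 : ind10 = ind (true :: false :: nil)).
  { apply functional_extensionality; intros x; unfold ind10, ind; simpl.
    destruct (x O), (x 1%nat); reflexivity. }
  rewrite I01, I10. fold n01 n10.
  split; auto. split; auto. split; auto. split; auto. split.
  - assert (A : F0 * (F1 * n01) <= F0 * n10) by (apply Rmult_le_compat_l; lra).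
    replace (F0 * (F1 * n01)) with n01 in A by (rewrite <- Rmult_assoc, HF; ring). lra.
  - assert (A : F1 * (F0 * n10) <= F1 * n01) by (apply Rmult_le_compat_l; lra).
    replace (F1 * (F0 * n10)) with n10 in A by (rewrite <- Rmult_assoc, (Rmult_comm F1 F0), HF; ring). lra.
Qed.
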